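(* Let $f:\mathcal{P}^n\to X$ be an onto, tops-only voting rule. Then $f$ is not obviously manipulable (NOM) if and only if every veto is a strong veto, i.e., $SV_i=V_i$ for each agent $i\in N$.
   Context: $N=\{1,\dots,n\}$ with $n\ge 2$ is the set of agents and $X$ is a finite set of alternatives with $|X|=m\ge 2$. $\mathcal{P}$ is the set of all strict preferences (linear orders) over $X$; for $P_i\in\mathcal{P}$, $t(P_i)$ is its top (best) alternative and $R_i$ the associated weak preference ($xR_iy$ iff $x=y$ or $xP_iy$). A rule is a function $f:\mathcal{P}^n\to X$, assumed onto. It is tops-only if $f(P)=f(P')$ whenever $t(P_i)=t(P_i')$ for all $i$. For $P_i\in\mathcal{P}$, the option set is $O^f(P_i)=\{f(P_i,P_{-i}):P_{-i}\in\mathcal{P}^{n-1}\}$. For $Y\subseteq X$ nonempty, $B(P_i,Y)$ and $W(P_i,Y)$ denote the best and worst elements of $Y$ according to $P_i$. A report $P_i'$ is a (profitable) manipulation of $f$ at $P_i$ if there is $P_{-i}$ with $f(P_i',P_{-i})\,P_i\,f(P_i,P_{-i})$. Such a manipulation is obvious if $W(P_i,O^f(P_i'))\,P_i\,W(P_i,O^f(P_i))$ or $B(P_i,O^f(P_i'))\,P_i\,B(P_i,O^f(P_i))$. $f$ is NOM if no agent has an obvious manipulation at any preference. Agent $i$ vetoes $x$ via $P_i$ if $x\notin O^f(P_i)$; $V_i$ is the set of alternatives that $i$ vetoes via some preference; for $x\in V_i$, $\mathcal{V}_i^x=\{P_i\in\mathcal{P}: i \text{ vetoes } x \text{ via } P_i\}$.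 Agent $i$ strongly vetoes $x$ if $\mathcal{V}_i^x=\{P_i\in\mathcal{P}:t(P_i)\neq x\}$; $SV_i$ is the set of alternatives strongly vetoed by $i$. *)

(* Defs.v *)
From mathcomp Require Import all_boot.
Set Implicit Arguments. Unset Strict Implicit. Unset Printing Implicit Defensive.

Section Voting.
Variables (n : nat) (X : finType).

(* A strict preference (linear order) over X, encoded by its injective (hence
   bijective) rank function into 'I_#|X|: rank 0 is the best alternative. *)
Definition pref := {r : {ffun X -> 'I_#|X|} | injectiveb r}.

Definition prefers (P : pref) (x y : X) : bool := (val P x < val P y)%N.

Definition is_top (P : pref) (x : X) : bool :=
  [forall y, (y != x) ==> prefers P x y].

Definition profile := {ffun 'I_n -> pref}.

Definition upd (P : profile) (i : 'I_n) (Pi : pref) : profile :=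
  [ffun j => if j == i then Pi else P j].

Definition onto (f : profile -> X) := forall x, exists P, f P = x.

Definition tops_only (f : profile -> X) :=
  forall P P' : profile, (forall i, is_top (P i) =1 is_top (P' i)) -> f P = f P'.

Definition option_set (f : profile -> X) (i : 'I_n) (Pi : pref) : {set X} :=
  [set x | [exists P : profile, f (upd P i Pi) == x]].

Definition is_best (P : pref) (Y : {set X}) (b : X) : bool :=
  (b \in Y) && [forall y in Y, (y != b) ==> prefers P b y].
Definition is_worst (P : pref) (Y : {set X}) (w : X) : bool :=
  (w \in Y) && [forall y in Y, (y != w) ==> prefers P y w].

Definition manipulation (f : profile -> X) (i : 'I_n) (Pi Pi' : pref) :=
  exists P : profile, prefers Pi (f (upd P i Pi')) (f (upd P i Pi)).

Definition obvious_manipulation (f : profile -> X) (i : 'I_n) (Pi Pi' : pref) :=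
  manipulation f i Pi Pi' /\
  ((exists w w', [&& is_worst Pi (option_set f i Pi) w,
                     is_worst Pi (option_set f i Pi') w' & prefers Pi w' w])
   \/
   (exists b b', [&& is_best Pi (option_set f i Pi) b,
                     is_best Pi (option_set f i Pi') b' & prefers Pi b' b])).

Definition NOM (f : profile -> X) :=
  forall i Pi Pi', ~ obvious_manipulation f i Pi Pi'.

Definition vetoes_via (f : profile -> X) (i : 'I_n) (x : X) (Pi : pref) : bool :=
  x \notin option_set f i Pi.

Definition in_V (f : profile -> X) (i : 'I_n) (x : X) :=
  exists Pi, vetoes_via f i x Pi.

(* x \in SV_i : V_i^x = {Pi | t(Pi) <> x} (x \in V_i follows since m >= 2) *)
Definition in_SV (f : profile -> X) (i : 'I_n) (x : X) :=
  in_V f i x /\ forall Pi, vetoes_via f i x Pi <-> ~~ is_top Pi x.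

End Voting.

(* Main.v *)
Require Import Defs.
From mathcomp Require Import all_boot.
Set Implicit Arguments. Unset Strict Implicit. Unset Printing Implicit Defensive.

Section Aux.
Variables (n : nat) (X : finType).
Implicit Types (P : pref X).

Lemma prefers_asym P x y : prefers P x y -> ~~ prefers P y x.
Proof. by rewrite /prefers => h; rewrite -leqNgt ltnW. Qed.

Lemma prefers_irr P x : ~~ prefers P x x.
Proof. by rewrite /prefers ltnn. Qed.

Lemma top_max P a y : is_top P a -> ~~ prefers P y a.
Proof.
move=> /forallP /(_ y); case: (eqVneq y a) => [->|ne] /=.
  by rewrite prefers_irr.
exact: prefers_asym.
Qed.

Lemma top_uniq P a y : is_top P a -> is_top P y = (y == a).
Proof.
move=> ha; apply/idP/eqP => [hy|->//].
apply/eqP; apply: contraT => ne.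
have := top_max a hy; move/forallP: ha => /(_ y); rewrite ne /= => ->.
by [].
Qed.

Lemma best_exists P (A : {set X}) y0 : y0 \in A -> exists b, is_best P A b.
Proof.
move=> y0A.
have Pinj : injective (val P) := injectiveP _ (valP P).
case: (arg_minnP (fun y => nat_of_ord (val P y)) y0A) => b bA bmin.
exists b; rewrite /is_best; apply/andP; split; first exact: bA.
apply/forall_inP => y yA; apply/implyP => ne.
rewrite /prefers ltn_neqAle bmin // andbT.
by apply: contra ne => /eqP /ord_inj /Pinj ->.
Qed.

Lemma worst_exists P (A : {set X}) y0 : y0 \in A -> exists w, is_worst P A w.
Proof.
move=> y0A.
have Pinj : injective (val P) := injectiveP _ (valP P).
case: (arg_maxnP (fun y => nat_of_ord (val P y)) y0A) => b bA bmax.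
exists b; rewrite /is_worst; apply/andP; split; first exact: bA.
apply/forall_inP => y yA; apply/implyP => ne.
rewrite /prefers ltn_neqAle; apply/andP; split; last exact: bmax.
by apply: contra ne => /eqP /ord_inj /Pinj ->.
Qed.

Lemma top_exists P : (0 < #|X|)%N -> exists a, is_top P a.
Proof.
case/card_gt0P => y0 _.
have [b /andP [_ hb]] := best_exists P (in_setT y0).
exists b; apply/forallP => y; exact: (forall_inP hb _ (in_setT y)).
Qed.

Definition rk (g : X -> nat) (y : X) := #|[set z | (g z < g y)%N]|.

Lemma rk_lt g y : (rk g y < #|X|)%N.
Proof.
rewrite /rk -cardsT; apply: proper_card; rewrite properT.
apply/eqP => e; have : y \in [set z | (g z < g y)%N] by rewrite e in_setT.
by rewrite inE ltnn.
Qed.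

Lemma rk_mono g y z : (g y < g z)%N -> (rk g y < rk g z)%N.
Proof.
move=> h; apply: proper_card; apply/properP; split.
  by apply/subsetP => u; rewrite !inE => h'; exact: ltn_trans h' h.
by exists y; rewrite !inE ?ltnn.
Qed.

Definition mkr g : {ffun X -> 'I_#|X|} := [ffun y => Ordinal (rk_lt g y)].

Lemma mkr_inj g : injective g -> injectiveb (mkr g).
Proof.
move=> gi; apply/injectiveP => y z; rewrite !ffunE => /(congr1 val) /= e.
case: (ltngtP (g y) (g z)) => h.
- by have := rk_mono h; rewrite e ltnn.
- by have := rk_mono h; rewrite e ltnn.
- exact: gi h.
Qed.

Definition mkpref g (gi : injective g) : pref X := exist _ (mkr g) (mkr_inj gi).

Lemma mkprefE g (gi : injective g) y z : prefers (mkpref gi) y z = (g y < g z)%N.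
Proof.
rewrite /prefers /= !ffunE /=.
apply/idP/idP; last exact: rk_mono.
move=> h; case: (ltngtP (g y) (g z)) => // h'.
- by have := rk_mono h'; rewrite ltnNge (ltnW h).
- by rewrite (gi _ _ h') ltnn in h.
Qed.

Definition gq (a x : X) (y : X) : nat :=
  if y == a then 0 else if y == x then #|X|.+1 else (enum_rank y).+1.

Lemma gq_inj a x : a != x -> injective (gq a x).
Proof.
move=> ax y z; rewrite /gq.
have hr : forall u : X, (enum_rank u).+1 != #|X|.+1.
  by move=> u; rewrite eqSS neq_ltn ltn_ord.
case: (eqVneq y a) => ya; case: (eqVneq z a) => za;
case: (eqVneq y x) => yx; case: (eqVneq z x) => zx; subst;
rewrite ?eqxx ?(negbTE ya) ?(negbTE za) ?(negbTE yx) ?(negbTE zx) ?(negbTE ax) //.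
all: try by [].
all: try by move=> e; move: (hr z); rewrite e eqxx.
all: try by move=> e; move: (hr y); rewrite e eqxx.
all: try by move=> [] /ord_inj /enum_rank_inj.

Qed.

Lemma upd_id (P : profile n X) i : upd P i (P i) = P.
Proof. by apply/ffunP => j; rewrite ffunE; case: eqP => // ->. Qed.

Lemma opt_tops (f : profile n X -> X) i P1 P2 :
  tops_only f -> is_top P1 =1 is_top P2 -> option_set f i P1 = option_set f i P2.
Proof.
move=> tf e; apply/setP => y; rewrite !inE.
apply/existsP/existsP => -[P /eqP <-]; exists P; apply/eqP; apply: tf => j z;
  rewrite !ffunE; case: (j == i) => //; by rewrite e.
Qed.

End Aux.

Theorem theorem1 (n : nat) (X : finType) (hn : (2 <= n)%N) (hm : (2 <= #|X|)%N)
  (f : profile n X -> X) :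
  onto f -> tops_only f ->
  (NOM f <-> forall (i : 'I_n) (x : X), in_SV f i x <-> in_V f i x).
Proof.
move=> fo tf.
have X0 : (0 < #|X|)%N by apply: leq_trans hm.
split.
- move=> nom i x; split; first by case.
  move=> hV; split => // Pi; split.
  + move=> hv; apply/negP => tx.
    case: (fo x) => P0 eP0.
    have inPi : f (upd P0 i Pi) \in option_set f i Pi.
      by rewrite inE; apply/existsP; exists P0.
    have nex : f (upd P0 i Pi) != x.
      by apply: contraNneq hv => <-.
    have [b hb] := best_exists Pi inPi.
    have bx : b != x.
      by case/andP: hb => bin _; apply: contraNneq hv => <-.
    apply: (nom i Pi (P0 i)); split.
    * exists P0; rewrite upd_id eP0.
      by move/forallP: tx => /(_ (f (upd P0 i Pi))); rewrite nex.
    * right; exists b, x; rewrite hb /=; apply/andP; split.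
        rewrite /is_best; apply/andP; split.
          by rewrite inE; apply/existsP; exists P0; rewrite upd_id eP0.
        apply/forall_inP => y _; exact: (forallP tx y).
      by move/forallP: tx => /(_ b); rewrite bx.
  + move=> ntx; apply/negP => xin.
    case: hV => Pi0 hv0.
    have [a ta] := top_exists Pi X0.
    have ax : a != x by apply: contraNneq ntx => <-.
    pose Q := mkpref (gq_inj ax).
    have tQ : is_top Q a.
      apply/forallP => y; apply/implyP => ya.
      by rewrite mkprefE /gq eqxx (negbTE ya); case: ifP.
    have eO : option_set f i Q = option_set f i Pi.
      by apply: opt_tops => // y; rewrite (top_uniq _ tQ) (top_uniq _ ta).
    have botQ : forall y, y != x -> prefers Q y x.
      move=> y yx; rewrite mkprefE /gq [x == a]eq_sym (negbTE ax) eqxx (negbTE yx).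
      by case: (y == a) => //; rewrite ltnS ltn_ord.
    move: xin; rewrite -eO => xin.
    have := xin; rewrite inE => /existsP [P /eqP eP].
    have in0 : f (upd P i Pi0) \in option_set f i Pi0.
      by rewrite inE; apply/existsP; exists P.
    have [w' hw'] := worst_exists Q in0.
    apply: (nom i Q Pi0); split.
    * exists P; rewrite eP; apply: botQ.
      by apply: contraNneq hv0 => <-.
    * left; exists x, w'; rewrite hw' /=; apply/andP; split.
        rewrite /is_worst xin /=; apply/forall_inP => y _; apply/implyP; exact: botQ.
      apply: botQ; case/andP: hw' => win _; by apply: contraNneq hv0 => <-.
- move=> H i Pi Pi' [_ obv].
  have [a ta] := top_exists Pi X0.
  have charV : forall y, y \in option_set f i Pi -> in_V f i y -> y = a.
    move=> y yin hV; case: ((H i y).2 hV) => _ /(_ Pi) [_ h2].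
    apply/eqP; rewrite -(top_uniq y ta); apply/negPn/negP => /h2.
    by rewrite /vetoes_via yin.
  have ain : a \in option_set f i Pi.
    apply/negPn/negP => ha.
    have hV : in_V f i a by exists Pi.
    case: ((H i a).2 hV) => _ /(_ Pi) [h1 _].
    by move: (h1 ha); rewrite ta.
  case: obv => [[w [w' /and3P [hw hw' pw]]] | [b [b' /and3P [hb hb' pb]]]].
  + case/andP: hw => win /forall_inP hw. case/andP: hw' => w'in /forall_inP hw'.
    case win': (w \in option_set f i Pi').
      have := hw' w win'; case: eqVneq => [e|ne] /=.
        by rewrite e (negbTE (prefers_irr _ _)) in pw.
      by move=> h; move: pw; rewrite (negbTE (prefers_asym h)).
    have hV : in_V f i w by exists Pi'; rewrite /vetoes_via win'.
    have e := charV w win hV.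
    by move: (top_max w' ta); rewrite -e pw.
  + case/andP: hb => bin /forall_inP hb.
    have eb : b = a.
      case: (eqVneq b a) => // ne; have := hb a ain; rewrite eq_sym ne /= => h.
      by move: (top_max b ta); rewrite h.
    by move: (top_max b' ta); rewrite -eb pb.
Qed.
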